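(* Let $K,F$ be non-negative integers. Then there exists at least one numerical semigroup $S$ with $\mathrm{F}(S)=F$ and $\mathrm{l}(S)=K$ if and only if $K+F$ is odd and $F\ge K+1$.
   Context: A numerical semigroup is a subset $S\subseteq\mathbb{N}$ closed under addition with $0\in S$ and $\mathbb{N}\setminus S$ finite; $\mathrm{F}(S)=\max(\mathbb{Z}\setminus S)$. $\mathrm{N}(S)=\{s\in S\mid s<\mathrm{F}(S)\}$, $\mathrm{L}(S)=\{x\in\mathbb{N}\setminus S\mid \mathrm{F}(S)-x\notin \mathrm{N}(S)\}$, $\mathrm{l}(S)=\#\mathrm{L}(S)$. *)

(* Defs.v *)
From mathcomp Require Import all_boot.
Set Implicit Arguments. Unset Strict Implicit. Unset Printing Implicit Defensive.

Definition numerical_semigroup (S : pred nat) : Prop :=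
  [/\ S 0,
      (forall a b, S a -> S b -> S (a + b)) &
      exists N, forall n, N <= n -> S n].

(* F(S) = F for a non-negative integer F, i.e. F = max (Z \ S).
   Negative integers are never in S, so for F >= 0 this means:
   F is not in S and every integer larger than F is in S. *)
Definition frobenius_is (S : pred nat) (F : nat) : Prop :=
  ~~ S F /\ (forall n, F < n -> S n).

Definition NS (S : pred nat) (F : nat) : pred nat :=
  fun s => S s && (s < F).

(* L(S) = { x in N \ S | F(S) - x notin N(S) }; the difference F - x is an
   integer, it is negative (hence not in N(S)) exactly when F < x. *)
Definition LS (S : pred nat) (F : nat) : pred nat :=
  fun x => ~~ S x && ((F < x) || ~~ NS S F (F - x)).

Definition card_LS_is (S : pred nat) (F K : nat) : Prop :=
  exists s : seq nat, [/\ uniq s, (forall x, (x \in s) = LS S F x) & size s = K].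

(* Main.v *)
Require Import Defs.
From mathcomp Require Import all_boot.
From mathcomp Require Import zify.

Lemma LS_char (S : pred nat) F : S 0 -> frobenius_is S F -> forall x,
  LS S F x = [&& x < F, ~~ S x & ~~ S (F - x)].
Proof.
move=> h0 [hF hf] x; unfold LS, NS.
case: (ltnP F x) => hx.
  by rewrite hf //= andbF.
case: (posnP x) => [->|xp]; first by rewrite h0 /= andbF.
have hlt : F - x < F by lia.
rewrite hlt andbT /=.
case: (ltnP x F) => hxF /=; first by [].
have -> : x = F by lia.
by rewrite subnn h0 !andbF.
Qed.

Theorem proposition37 (K F : nat) :
  (exists S : pred nat,
      [/\ numerical_semigroup S, frobenius_is S F & card_LS_is S F K])
  <-> (odd (K + F) /\ K + 1 <= F).
Proof.
split.
- move=> [S [[h0 hadd _] hfr [s [hu hm hs]]]].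
  have hc := @LS_char S F h0 hfr.
  have hF0 : 0 < F.
    case: (posnP F) => // F0; move: hfr => [hF _]; by rewrite F0 h0 in hF.
  have memS x : (x \in s) = [&& x < F, ~~ S x & ~~ S (F - x)] by rewrite hm hc.
  split; last first.
    have : size s <= size (iota 1 F.-1).
      apply: uniq_leq_size => // x; rewrite memS mem_iota => /and3P [h1 h2 _].
      case: (posnP x) => [x0|xp]; first by rewrite x0 h0 in h2.
      lia.
    rewrite size_iota; lia.
  set lo := filter (fun x => 2 * x < F) s.
  set mid := filter (fun x => 2 * x == F) s.
  set hi := filter (fun x => F < 2 * x) s.
  have hsz : size s = size lo + size mid + size hi.
    rewrite !size_filter.
    rewrite -[size s](count_predT s).
    have := count_predUI (fun x => 2 * x < F) (fun x => 2 * x == F) s.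
    have := count_predUI (predU (fun x => 2 * x < F) (fun x => 2 * x == F)) (fun x => F < 2 * x) s.
    have E1 : count (predI (fun x => 2 * x < F) (fun x => 2 * x == F)) s = 0.
      apply/eqP; rewrite -leqn0 -(count_pred0 s); apply: sub_count => x /=; lia.
    have E2 : count (predI (predU (fun x => 2 * x < F) (fun x => 2 * x == F)) (fun x => F < 2 * x)) s = 0.
      apply/eqP; rewrite -leqn0 -(count_pred0 s); apply: sub_count => x /=; lia.
    have E3 : count (predU (predU (fun x => 2 * x < F) (fun x => 2 * x == F)) (fun x => F < 2 * x)) s = count predT s.
      apply: eq_count => x /=; lia.
    rewrite E1 E2 E3; lia.
  have hmid : size mid = ~~ odd F.
    have hum : uniq mid by apply: filter_uniq.
    case hoF: (odd F).
      rewrite /= size_filter; transitivity (count pred0 s); last exact: count_pred0.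
      apply: eq_count => x /=; apply/negbTE; apply/negP => /eqP E.
      by move: hoF; rewrite -E oddM.
    have : perm_eq mid [:: F./2].
      apply: uniq_perm => // x; rewrite mem_filter memS inE.
      apply/idP/idP.
        move=> /andP [/eqP E _]; apply/eqP; rewrite -E; lia.
      move=> /eqP ->.
      have hF2 : 2 * F./2 = F.
        by rewrite mul2n -{2}(odd_double_half F) hoF.
      rewrite hF2 eqxx /=.
      have hSF : ~~ S F./2.
        apply/negP => hh; move: (hadd _ _ hh hh); rewrite addnn -mul2n hF2.
        by move: hfr => [/negP].
      have -> : F - F./2 = F./2 by lia.
      rewrite hSF !andbT; lia.
    by move/perm_size => ->.
  have hhi : size hi = size lo.
    have hul : uniq lo by apply: filter_uniq.
    have : perm_eq hi (map (fun x => F - x) lo).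
      apply: uniq_perm; first by apply: filter_uniq.
        rewrite map_inj_in_uniq // => x y; rewrite !mem_filter !memS.
        move=> /andP [_ /andP [hx _]] /andP [_ /andP [hy _]]; lia.
      move=> y; rewrite mem_filter memS; apply/idP/mapP.
        move=> /andP [h1 /and3P [h2 h3 h4]]; exists (F - y); last by lia.
        rewrite mem_filter memS.
        have -> : F - (F - y) = y by lia.
        rewrite h3 h4 andbT; apply/andP; split; lia.
      move=> [x]; rewrite mem_filter memS => /andP [h1 /and3P [h2 h3 h4]] ->.
      have -> : F - (F - x) = x by lia.
      have xp : 0 < x by move: h3; case: (posnP x) => // ->; rewrite h0.
      rewrite h3 h4 /= !andbT; apply/andP; split; lia.
    by move/perm_size => ->; rewrite size_map.
  rewrite -hs hsz hmid hhi !oddD; by case: (odd F); case: (odd (size lo)).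
- move=> [ho hKF].
  set t := (K + F + 1)./2.
  have ht : t + t = K + F + 1.
    rewrite /t addnn -{2}(odd_double_half (K + F + 1)) addn1 /= ho //.
  exists (fun n => (n == 0) || ((t <= n) && (n != F))).
  split.
  + split => //.
      move=> a b /= ha hb.
      case: (posnP a) => [->|ap]; first by rewrite add0n.
      case: (posnP b) => [->|bp]; first by rewrite addn0.
      move: ha hb; rewrite !(gtn_eqF ap) !(gtn_eqF bp) /= => /andP [ha _] /andP [hb _].
      apply/orP; right; apply/andP; split; lia.
    exists F.+1 => n hn /=; apply/orP; right; apply/andP; split; lia.
  + split => /=.
      rewrite eqxx andbF orbF; lia.
    move=> n hn; apply/orP; right; apply/andP; split; lia.
  + exists (iota (F + 1 - t) K); split.
    * exact: iota_uniq.
    * move=> x; rewrite mem_iota; unfold LS, NS; rewrite /=.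
      case: (ltnP x (F + 1 - t)) => h1 /=.
        case: (posnP x) => [->|xp] //=.
        case: (ltnP F x) => h2 /=; first lia.
        lia.
      case: (ltnP x (F + 1 - t + K)) => h2 /=.
        lia.
      lia.
    * by rewrite size_iota.
Qed.
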